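(* Let $\mathcal H$ be a finite-dimensional Hilbert space, $\rho=|\psi\rangle\langle\psi|$ a pure state, and let $\mathcal S=\{\rho,\sigma^{(1)},\dots,\sigma^{(n)}\}$ be a medium consistent family of histories. Then there exists a medium consistent family $\mathcal S'=\{\rho,\sigma'^{(1)},\dots,\sigma'^{(n)}\}$ in which each $\sigma'^{(i)}=\{|\phi^{(i)}_j\rangle\langle\phi^{(i)}_j|\}_j$ consists of rank-1 projectors and is a fine graining of $\sigma^{(i)}$.
   Context: A set of projectors $\sigma=\{P_\alpha\}_{\alpha=1,\dots,m}$ on $\mathcal H$ is exhaustive and exclusive if $\sum_\alpha P_\alpha=\mathbb 1$ and $P_\alpha P_\beta=\delta_{\alpha\beta}P_\alpha$. A family of histories $\{\rho,\sigma^{(1)},\dots,\sigma^{(n)}\}$ consists of an initial density matrix $\rho$ and exhaustive exclusive sets $\sigma^{(j)}=\{P^{(j)}_{\alpha_j}\}$ (Heisenberg-picture projectors at successive times $t_1<\dots<t_n$). A history is a tuple $\alpha=(\alpha_1,\dots,\alpha_n)$ with history operator $C_\alpha=P^{(1)}_{\alpha_1}\cdots P^{(n)}_{\alpha_n}$, probability $Pr(\alpha)=\mathrm{Tr}\{C_\alpha^\dagger\rho C_\alpha\}$ and coherence function $D(\alpha;\beta)=\mathrm{Tr}\{C_\alpha^\dagger\rho C_\beta\}$. The family is medium consistent if $D(\alpha;\beta)=\delta_{\alpha\beta}Pr(\alpha)$ for all histories $\alpha,\beta$. An exhaustive exclusive set $\sigma'$ is a fine graining of $\sigma$ if every projector of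 $\sigma$ is a sum of projectors of $\sigma'$ (equivalently $\sigma$ is a coarse graining of $\sigma'$). *)

(* Defs.v *)
(* Finite-dimensional Hilbert space = 'cV[C]_d over a
   numeric algebraically closed field C (e.g. algC, or R[i]). *)
From HB Require Import structures.
From mathcomp Require Import all_boot all_order all_algebra.
Set Implicit Arguments. Unset Strict Implicit. Unset Printing Implicit Defensive.
Import Order.TTheory GRing.Theory Num.Theory.
Local Open Scope ring_scope.

Section QH.
Variables (C : numClosedFieldType) (d : nat).

Definition adj (p q : nat) (A : 'M[C]_(p, q)) : 'M[C]_(q, p) :=
  (map_mx (@Num.conj C) A)^T.

Definition projector (P : 'M[C]_d) : Prop := P *m P = P /\ adj P = P.

Definition exh_excl (m : nat) (sigma : 'I_m -> 'M[C]_d) : Prop :=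
  (forall a, projector (sigma a)) /\
  \sum_(a < m) sigma a = 1%:M /\
  (forall a b, sigma a *m sigma b = if a == b then sigma a else 0).

(* a family of histories: n times, m j alternatives at time j *)
Definition history (n : nat) (m : 'I_n -> nat) := forall j : 'I_n, 'I_(m j).

Definition hist_op (n : nat) (m : 'I_n -> nat)
  (sigma : forall j : 'I_n, 'I_(m j) -> 'M[C]_d) (alpha : history m) : 'M[C]_d :=
  foldr (fun j acc => sigma j (alpha j) *m acc) 1%:M (enum 'I_n).

Definition coherence (n : nat) (m : 'I_n -> nat) (rho : 'M[C]_d)
  (sigma : forall j : 'I_n, 'I_(m j) -> 'M[C]_d) (alpha beta : history m) : C :=
  \tr (adj (hist_op sigma alpha) *m rho *m hist_op sigma beta).

Definition hist_prob (n : nat) (m : 'I_n -> nat) (rho : 'M[C]_d)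
  (sigma : forall j : 'I_n, 'I_(m j) -> 'M[C]_d) (alpha : history m) : C :=
  coherence rho sigma alpha alpha.

Definition medium_consistent (n : nat) (m : 'I_n -> nat) (rho : 'M[C]_d)
  (sigma : forall j : 'I_n, 'I_(m j) -> 'M[C]_d) : Prop :=
  (forall j, exh_excl (sigma j)) /\
  forall alpha beta : history m,
    (alpha = beta -> coherence rho sigma alpha beta = hist_prob rho sigma alpha) /\
    (alpha <> beta -> coherence rho sigma alpha beta = 0).

Definition fine_graining (m m' : nat) (sigma : 'I_m -> 'M[C]_d)
  (sigma' : 'I_m' -> 'M[C]_d) : Prop :=
  forall a, exists S : {set 'I_m'}, sigma a = \sum_(b in S) sigma' b.

End QH.

(* Main.v *)
Require Import Defs.
From Stdlib Require Import FunctionalExtensionality.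
From HB Require Import structures.
From mathcomp Require Import all_boot all_order all_algebra.
From mathcomp Require Import mxred sesquilinear spectral.
Set Implicit Arguments. Unset Strict Implicit. Unset Printing Implicit Defensive.
Import Order.TTheory GRing.Theory Num.Theory Num.Def.
Local Open Scope ring_scope.
Local Open Scope sesquilinear_scope.


Section Adj.
Variable C : numClosedFieldType.

Lemma adjM p q r (A : 'M[C]_(p, q)) (B : 'M[C]_(q, r)) :
  adj (A *m B) = adj B *m adj A.
Proof. by rewrite /adj map_mxM trmx_mul. Qed.

Lemma adjK p q (A : 'M[C]_(p, q)) : adj (adj A) = A.
Proof. by apply/matrixP=> i j; rewrite !mxE conjCK. Qed.

Lemma adj0 p q : adj (0 : 'M[C]_(p, q)) = 0.
Proof. by apply/matrixP=> i j; rewrite !mxE conjC0. Qed.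

Lemma adj1 p : adj (1%:M : 'M[C]_p) = 1%:M.
Proof. by apply/matrixP=> i j; rewrite !mxE eq_sym; case: (_ == _); rewrite ?conjC1 ?conjC0. Qed.

Lemma adjZ p q c (A : 'M[C]_(p, q)) : adj (c *: A) = (Num.conj c) *: adj A.
Proof. by apply/matrixP=> i j; rewrite !mxE rmorphM. Qed.

Lemma adj_sum p q (I : finType) (F : I -> 'M[C]_(p, q)) :
  adj (\sum_i F i) = \sum_i adj (F i).
Proof.
apply/matrixP=> i j; rewrite !mxE !summxE rmorph_sum; apply: eq_bigr => k _.
by rewrite !mxE.
Qed.

Lemma adjE p q (A : 'M[C]_(p, q)) : adj A = (A ^t conjC).
Proof. by apply/matrixP=> i j; rewrite !mxE. Qed.

End Adj.

Lemma adj_ij (C : numClosedFieldType) p q (A : 'M[C]_(p, q)) i j :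
  adj A i j = Num.conj (A j i).
Proof. by rewrite /adj mxE [in LHS]mxE. Qed.


Section Core.
Variable C : numClosedFieldType.

Lemma colM p q r (A : 'M[C]_(p, q)) (B : 'M[C]_(q, r)) c :
  col c (A *m B) = A *m col c B.
Proof. by rewrite !colE mulmxA. Qed.

Lemma colW_ip p q (W : 'M[C]_(p, q)) c c' :
  adj (col c W) *m col c' W = ((adj W *m W) c c')%:M.
Proof.
apply/matrixP => i j; rewrite !ord1 !mxE eqxx mulr1n; apply: eq_bigr => k _.
by rewrite !mxE.
Qed.

Variable N : nat.

Lemma core (m : nat) (P : 'I_m -> 'M[C]_N.+1) (xs : seq 'cV[C]_N.+1) :
  exh_excl P ->
  (forall x, x \in xs -> exists a, P a *m x = x) ->
  (forall x y, x \in xs -> y \in xs -> x = y \/ adj x *m y = 0) ->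
  exists W : 'M[C]_N.+1, [/\ adj W *m W = 1%:M, W *m adj W = 1%:M,
     forall c, exists a, P a *m col c W = col c W &
     forall x c, x \in xs -> col c W *m (adj (col c W) *m x) = 0 \/
                             col c W *m (adj (col c W) *m x) = x].
Proof.
move=> [Pp [Psum Porth]] Hin Hort.
have PH a : adj (P a) = P a by case: (Pp a).
have PP a : P a *m P a = P a by case: (Pp a).
have Px a (x : 'cV[C]_N.+1) b : P b *m x = x -> P a *m x = if a == b then x else 0.
  move=> <-; rewrite mulmxA Porth; case: eqP => [->|_] //; by rewrite mul0mx.
pose As := [seq P a | a <- enum 'I_m] ++ [seq x *m adj x | x <- xs].
have AsH : forall A, A \in As -> adj A = A.
  move=> A; rewrite mem_cat => /orP[/mapP[a _ ->]|/mapP[x _ ->]]; first exact: PH.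
  by rewrite adjM adjK.
have mix a y : y \in xs -> P a *m (y *m adj y) = y *m adj y *m P a.
  move=> yin; have [c Pc] := Hin y yin.
  rewrite mulmxA (Px a y c Pc) -mulmxA -(PH a) -adjM (Px a y c Pc).
  by case: eqP => _; rewrite ?mul0mx ?adj0 ?mulmx0.
have Ascomm : {in As &, forall A B, comm_mx A B}.
  move=> A B; rewrite /comm_mx !mem_cat.
  move=> /orP[/mapP[a _ ->]|/mapP[x xin ->]] /orP[/mapP[b _ ->]|/mapP[y yin ->]].
  - by rewrite !Porth eq_sym; case: eqP => [->|].
  - exact: mix.
  - by rewrite mix.
  - have [->|o] := Hort x y xin yin; first done.
    have o' : adj y *m x = 0 by rewrite -(adjK x) -adjM o adj0.
    by rewrite -!mulmxA [adj x *m (y *m _)]mulmxA o [adj y *m (x *m _)]mulmxA o' !mul0mx !mulmx0.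
have [V Vu /allP Vtri] := cotrigonalization Ascomm.
have VV : V *m adj V = 1%:M by rewrite adjE; exact/unitarymxP.
have WV : adj V *m V = 1%:M by exact: mulmx1C.
have eig A c : A \in As -> exists l, A *m col c (adj V) = l *: col c (adj V).
  move=> Ain; pose T := V *m A *m adj V.
  have Ttri : is_trig_mx T.
    have := Vtri A Ain; rewrite /= /similar_to /conjmx pinvmx_unitary //.
    by rewrite -adjE.
  have TH : adj T = T by rewrite /T !adjM adjK (AsH A Ain) mulmxA.
  move/is_trig_mxP: Ttri => Tt.
  have Tdiag i j : i != j -> T i j = 0.
    case: (ltngtP i j) => [lt|lt|/val_inj ->]; last by rewrite eqxx.
      by move=> _; apply: Tt.
    move=> _; have E : adj T i j = Num.conj (T j i) by rewrite /adj mxE [in LHS]mxE.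
    by rewrite -TH E (Tt j i lt) conjC0.
  exists (T c c).
  have AW : A *m adj V = adj V *m T by rewrite /T !mulmxA WV mul1mx.
  rewrite -colM AW; clearbody T; apply/matrixP => i j; rewrite !mxE (bigD1 c) //= big1 => [|k kc]; last by rewrite Tdiag ?mulr0.
  by rewrite addr0 mulrC !mxE.
exists (adj V); split.
- by rewrite adjK.
- by rewrite adjK.
- move=> c; set phi := col c (adj V).
  have phiip : adj phi *m phi = 1%:M by rewrite colW_ip adjK VV mxE eqxx.
  have phinz : phi != 0.
    apply/eqP => h; move: phiip; rewrite h mulmx0 => /matrixP/(_ 0 0).
    rewrite !mxE eqxx mulr1n => /eqP; by rewrite eq_sym oner_eq0.
  have [a Pa] : exists a, P a *m phi != 0.
    case: (pickP (fun a => P a *m phi != 0)) => [a Pa|none]; first by exists a.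
    have : phi = \sum_a P a *m phi by rewrite -mulmx_suml Psum mul1mx.
    rewrite big1 => [phi0|a _]; first by rewrite phi0 eqxx in phinz.
    exact/eqP/negbFE/none.
  have PaAs : P a \in As by rewrite mem_cat map_f ?mem_enum.
  have [l Pl] := eig (P a) c PaAs.
  exists a.
  have l0 : l != 0 by apply: contraNneq Pa => l0; rewrite Pl l0 scale0r.
  have e : P a *m (P a *m phi) = P a *m phi by rewrite mulmxA PP.
  rewrite Pl -scalemxAr Pl scalerA in e.
  move/eqP: e; rewrite -subr_eq0 -scalerBl scalemx_eq0 (negbTE phinz) orbF subr_eq0 => /eqP e.
  have l1 : l = 1 by apply: (mulIf l0); rewrite mul1r.
  by rewrite Pl l1 scale1r.
- move=> x c xin; set phi := col c (adj V).
  have phiip : adj phi *m phi = 1%:M by rewrite colW_ip adjK VV mxE eqxx.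
  have xAs : x *m adj x \in As by rewrite mem_cat; apply/orP; right; apply/mapP; exists x.
  have [l Hl] := eig (x *m adj x) c xAs.
  have e : adj phi *m x = adj (adj x *m phi) by rewrite adjM adjK.
  case: (eqVneq ((adj x *m phi) 0 0) 0) => t0.
    left; have s0 : adj phi *m x = 0.
      rewrite [LHS]mx11_scalar e adj_ij t0 conjC0 -scalemx1 scale0r //.
    by rewrite s0 mulmx0.
  right.
  have xe : x = (l / (adj x *m phi) 0 0) *: phi.
    have Hl' : (adj x *m phi) 0 0 *: x = l *: phi.
      by rewrite -mul_mx_scalar -mx11_scalar mulmxA.
    by rewrite [l / _]mulrC -scalerA -Hl' scalerA mulVf ?scale1r.
  by rewrite xe -!scalemxAr phiip mulmx1.
Qed.

End Core.


Section Hist.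
Variables (C : numClosedFieldType) (N n : nat) (psi : 'cV[C]_N.+1).

Local Notation fam m := (forall j : 'I_n, 'I_(m j) -> 'M[C]_N.+1).

Definition Gm (m : 'I_n -> nat) (s : forall j : 'I_n, 'I_(m j) -> 'M[C]_N.+1)
  (al : history m) (i : nat) : 'M[C]_N.+1 :=
  if (insub i : option 'I_n) is Some j then s j (al j) else 1%:M.

Definition Cop m s (al : history m) k : 'M[C]_N.+1 := \prod_(i < k) Gm s al i.

Definition chain m s (al : history m) k := adj (@Cop m s al k) *m psi.

Lemma hist_Cop (m : 'I_n -> nat) (s : fam m) (al : history m) : hist_op s al = Cop s al n.
Proof.
rewrite /hist_op /Cop.
have -> : foldr (fun j acc => s j (al j) *m acc) 1%:M (enum 'I_n) =
          \prod_(j <- enum 'I_n) s j (al j).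
  by elim: (enum 'I_n) => [|j r IH]; rewrite ?big_nil ?big_cons //= IH.
rewrite -(big_mkord xpredT) /index_iota subn0 -val_enum_ord big_map; apply: eq_bigr => j _; by rewrite /Gm valK.
Qed.


Lemma CopS (m : 'I_n -> nat) (s : fam m) (al : history m) k : Cop s al k.+1 = Cop s al k *m Gm s al k.
Proof. by rewrite /Cop big_ord_recr. Qed.

Lemma chainS (m : 'I_n -> nat) (s : fam m) (al : history m) (kk : 'I_n) :
  chain s al kk.+1 = adj (s kk (al kk)) *m chain s al kk.
Proof. by rewrite /chain CopS adjM -mulmxA /Gm valK. Qed.

Lemma Cop_agree (m : 'I_n -> nat) (s : fam m) (al be : history m) k :
  (forall j : 'I_n, (j < k)%N -> al j = be j) -> Cop s al k = Cop s be k.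
Proof.
move=> H; apply: eq_bigr => i _; rewrite /Gm; case: insubP => [j _ ji|//].
by rewrite H // ji ltn_ord.
Qed.

Lemma chain_agree (m : 'I_n -> nat) (s : fam m) (al be : history m) k :
  (forall j : 'I_n, (j < k)%N -> al j = be j) -> chain s al k = chain s be k.
Proof. by move=> H; rewrite /chain (Cop_agree s H). Qed.

Lemma chain_0 (m : 'I_n -> nat) (s : fam m) (al : history m) : chain s al 0 = psi.
Proof. by rewrite /chain /Cop big_ord0 adj1 mul1mx. Qed.

Lemma chain0 (m : 'I_n -> nat) (s : fam m) (al be : history m) : chain s al 0 = chain s be 0.
Proof. by apply: chain_agree => j. Qed.

Lemma coh_chain (m : 'I_n -> nat) (s : fam m) (al be : history m) :
  coherence (psi *m adj psi) s al be = \tr (adj (chain s be n) *m chain s al n).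
Proof.
by rewrite /coherence !hist_Cop /chain adjM adjK [RHS]mxtrace_mulC !mulmxA.
Qed.

Lemma tr11_0 (M : 'M[C]_1) : \tr M = 0 <-> M = 0.
Proof.
split => [h|->]; last by rewrite mxtrace0.
by rewrite [M]mx11_scalar -trace_mx11 h -scalemx1 scale0r.
Qed.

Definition dif m k (al be : history m) :=
  [exists i : 'I_n, (i < k)%N && (al i != be i)].

Lemma difS (m : 'I_n -> nat) k (al be : history m) : dif k al be -> dif k.+1 al be.
Proof.
move=> /existsP [i /andP [ik ne]]; apply/existsP; exists i.
by rewrite ne andbT ltnS ltnW.
Qed.


Definition upd (m : 'I_n -> nat) (al : history m) (kk : 'I_n) (a : 'I_(m kk)) :
  history m :=
  fun j => if j == kk then odflt (al j) (insub (val a)) else al j.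
Arguments upd {m} al kk a.

Lemma upd_at (m : 'I_n -> nat) (al : history m) kk a : upd al kk a kk = a.
Proof.
rewrite /upd eqxx; case: insubP => [u _ /= e|]; first exact: val_inj.
by rewrite ltn_ord.
Qed.

Lemma upd_neq (m : 'I_n -> nat) (al : history m) kk a j :
  j != kk -> upd al kk a j = al j.
Proof. by rewrite /upd => /negbTE ->. Qed.

Lemma dif_sym (m : 'I_n -> nat) k (al be : history m) : dif k al be = dif k be al.
Proof.
by apply/existsP/existsP => -[i /andP [ik ne]]; exists i; rewrite ik eq_sym.
Qed.

Lemma ndif (m : 'I_n -> nat) k (al be : history m) :
  ~~ dif k al be -> forall j : 'I_n, (j < k)%N -> al j = be j.
Proof.
by move/existsPn => H j jk; move: (H j); rewrite jk /= negbK => /eqP.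
Qed.

Lemma trunc (m : 'I_n -> nat) (s : fam m) :
  (forall j, exh_excl (s j)) ->
  (forall al be : history m, al <> be -> adj (chain s be n) *m chain s al n = 0) ->
  forall t k, (k + t)%N = n -> forall al be : history m, dif k al be ->
    adj (chain s be k) *m chain s al k = 0.
Proof.
move=> Hex Hfull; elim => [|t IH] k.
  rewrite addn0 => -> al be /existsP [i /andP [_ ne]]; apply: Hfull => eab.
  by rewrite eab eqxx in ne.
move=> e al be d; have lt : (k < n)%N by rewrite -e addnS ltnS leq_addr.
pose kk := Ordinal lt.
have [Hp [Hs Ho]] := Hex kk.
have step (g : history m) a : chain s (upd g kk a) k.+1 = s kk a *m chain s g k.
  rewrite (chainS _ _ kk) upd_at (proj2 (Hp a)); congr (_ *m _).
  apply: chain_agree => j jk; apply: upd_neq.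
  by rewrite -val_eqE /= ltn_eqF.
have dec (g : history m) : chain s g k = \sum_a chain s (upd g kk a) k.+1.
  rewrite -[LHS]mul1mx -Hs mulmx_suml; apply: eq_bigr => a _; by rewrite step.
rewrite (dec al) (dec be) adj_sum mulmx_suml big1 // => b _.
rewrite mulmx_sumr big1 // => a _.
apply: IH; first by rewrite addSnnS.
move: d => /existsP [i /andP [ik ne]]; apply/existsP; exists i.
have ik' : i != kk by rewrite -val_eqE /= ltn_eqF.
by rewrite !upd_neq // ne andbT ltnS ltnW.
Qed.

End Hist.


Section QQ.
Variables (C : numClosedFieldType) (N : nat).

Definition Qf (W : 'M[C]_N.+1) (c : 'I_N.+1) := col c W *m adj (col c W).

Lemma sumQ (W : 'M[C]_N.+1) : \sum_c Qf W c = W *m adj W.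
Proof.
apply/matrixP => i j; rewrite summxE !mxE; apply: eq_bigr => c _.
by rewrite !mxE big_ord1 !mxE.
Qed.

Lemma Q_exh (W : 'M[C]_N.+1) : adj W *m W = 1%:M -> W *m adj W = 1%:M ->
  exh_excl (Qf W).
Proof.
move=> W1 W2.
have ip c c' : adj (col c W) *m col c' W = (c == c')%:R%:M.
  by rewrite colW_ip W1 mxE.
split; [|split].
- move=> c; split; last by rewrite /Qf adjM adjK.
  by rewrite /Qf mulmxA -(mulmxA (col c W)) ip eqxx mulmx1.
- by rewrite sumQ.
- move=> a b; rewrite /Qf mulmxA -(mulmxA (col a W)) ip.
  case: eqP => [->|_]; first by rewrite mulmx1.
  by rewrite -scalemx1 scale0r mulmx0 mul0mx.
Qed.

Lemma Q_fine (m : nat) (P : 'I_m -> 'M[C]_N.+1) (W : 'M[C]_N.+1) (f : 'I_N.+1 -> 'I_m) :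
  exh_excl P -> W *m adj W = 1%:M ->
  (forall c, P (f c) *m col c W = col c W) -> fine_graining P (Qf W).
Proof.
move=> [Hp [Hs Ho]] W2 W3 a; exists [set c | f c == a].
rewrite -[LHS]mulmx1 -W2 -sumQ mulmx_sumr [RHS]big_mkcond /=; apply: eq_bigr => c _.
rewrite inE /Qf mulmxA; case: eqP => [<-|ne]; first by rewrite W3.
rewrite -(W3 c) mulmxA Ho; case: eqP => [e|_]; [by case: ne | by rewrite !mul0mx].
Qed.

End QQ.

Section FineOrth.
Variables (C : numClosedFieldType) (N n : nat) (psi : 'cV[C]_N.+1).
Local Notation fam m := (forall j : 'I_n, 'I_(m j) -> 'M[C]_N.+1).
Local Notation chain := (chain psi).

Definition xsl (m : 'I_n -> nat) (s : fam m) (j : 'I_n) : seq 'cV[C]_N.+1 :=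
  [seq chain s (fun i => g i) j.+1 | g : {dffun forall i : 'I_n, 'I_(m i)} <- enum {dffun forall i : 'I_n, 'I_(m i)}].

Lemma in_xsl (m : 'I_n -> nat) (s : fam m) (al : history m) (j : 'I_n) :
  chain s al j.+1 \in xsl s j.
Proof.
apply/mapP; exists (@finfun _ (fun i => 'I_(m i)) (fun i => al i)).
  by rewrite mem_enum.
by apply: chain_agree => i _; rewrite ffunE.
Qed.


Lemma fine_orth (m : 'I_n -> nat) (s : fam m) (W : 'I_n -> 'M[C]_N.+1)
  (f : forall j : 'I_n, 'I_N.+1 -> 'I_(m j)) :
  (forall j, exh_excl (s j)) ->
  (forall al be : history m, al <> be -> adj (chain s be n) *m chain s al n = 0) ->
  (forall j, adj (W j) *m W j = 1%:M) ->
  (forall j c, s j (f j c) *m col c (W j) = col c (W j)) ->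
  (forall j x c, x \in xsl s j -> col c (W j) *m (adj (col c (W j)) *m x) = 0 \/
                                  col c (W j) *m (adj (col c (W j)) *m x) = x) ->
  forall b b' : history (fun _ : 'I_n => N.+1), b <> b' ->
    adj (chain (fun j => Qf (W j)) b' n) *m chain (fun j => Qf (W j)) b n = 0.
Proof.
move=> Hex Hfull W1 W3 W4 b b' ne.
set s' := fun j => Qf (W j).
pose F (g : history (fun _ : 'I_n => N.+1)) : history m := fun j => f j (g j).
have Qadj j c : adj (Qf (W j) c) = Qf (W j) c by rewrite /Qf adjM adjK.
have stepQ j c v : Qf (W j) c *m v =
    col c (W j) *m (adj (col c (W j)) *m (s j (f j c) *m v)).
  have [Hp _] := Hex j.
  have aphi : adj (col c (W j)) = adj (col c (W j)) *m s j (f j c).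
    by rewrite -{1}(W3 j c) adjM (proj2 (Hp _)).
  by rewrite /Qf -mulmxA {1}aphi -mulmxA.
have Fine : forall k, (k <= n)%N -> forall g,
    chain s' g k = 0 \/ chain s' g k = chain s (F g) k.
  elim => [|k IH] lek g; first by right; rewrite !chain_0.
  have lt : (k < n)%N := lek.
  pose kk := Ordinal lt.
  have [Hp _] := Hex kk.
  rewrite (chainS psi s' g kk) (chainS psi s (F g) kk) Qadj.
  case: (IH (ltnW lek) g) => ->; first by left; rewrite mulmx0.
  rewrite stepQ (proj2 (Hp _)); apply: W4.
  have := in_xsl s (F g) kk.
  by rewrite (chainS psi s (F g) kk) (proj2 (Hp _)).
have nzS : forall k (lt : (k < n)%N) g,
    chain s' g k.+1 != 0 -> chain s' g k != 0.
  move=> k lt g; apply: contraNneq => h.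
  by rewrite (chainS psi s' g (Ordinal lt)) h mulmx0.
have Inj : forall k, (k <= n)%N -> forall g g', dif k g g' ->
    chain s' g k != 0 -> chain s' g' k != 0 -> dif k (F g) (F g').
  elim => [|k IH] lek g g'; first by case/existsP => i /andP [].
  move=> d nz nz'.
  have lt : (k < n)%N := lek.
  pose kk := Ordinal lt.
  have [Hp _] := Hex kk.
  have nz0 := nzS k lt g nz; have nz0' := nzS k lt g' nz'.
  case: (boolP (dif k g g')) => dk.
    by apply: difS; apply: IH => //; exact: ltnW.
  have agree := ndif dk.
  have gkk : g kk != g' kk.
    move: d => /existsP [i /andP [ik ne']].
    case: (ltnP i k) => [ik'|ki]; first by rewrite agree ?eqxx in ne'.
    have -> : kk = i by apply: val_inj => /=; apply/eqP; rewrite eqn_leq ki -ltnS ik.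
    done.
  case: (eqVneq (f kk (g kk)) (f kk (g' kk))) => fe; last first.
    by apply/existsP; exists kk; apply/andP; split; [rewrite /= ltnSn | exact: fe].
  exfalso.
  have cw : chain s' g' k = chain s' g k.
    by apply: chain_agree => j jk; rewrite agree.
  have [e0|ev] := Fine k (ltnW lek) g; first by rewrite e0 eqxx in nz0.
  have xin : s kk (f kk (g kk)) *m chain s (F g) k \in xsl s kk.
    have := in_xsl s (F g) kk.
    by rewrite (chainS psi s (F g) kk) (proj2 (Hp _)).
  set x := s kk (f kk (g kk)) *m chain s (F g) k in xin.
  have E1 : chain s' g k.+1 = col (g kk) (W kk) *m (adj (col (g kk) (W kk)) *m x).
    by rewrite (chainS psi s' g kk) Qadj ev stepQ.
  have E2 : chain s' g' k.+1 = col (g' kk) (W kk) *m (adj (col (g' kk) (W kk)) *m x).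
    by rewrite (chainS psi s' g' kk) Qadj cw ev stepQ /x fe.
  have X1 : col (g kk) (W kk) *m (adj (col (g kk) (W kk)) *m x) = x.
    by case: (W4 kk x (g kk) xin) => // h; rewrite E1 h eqxx in nz.
  have X2 : col (g' kk) (W kk) *m (adj (col (g' kk) (W kk)) *m x) = x.
    by case: (W4 kk x (g' kk) xin) => // h; rewrite E2 h eqxx in nz'.
  have ip : adj (col (g' kk) (W kk)) *m col (g kk) (W kk) = 0.
    by rewrite colW_ip W1 mxE eq_sym (negbTE gkk) mulr0n -scalemx1 scale0r.
  have h : adj (col (g' kk) (W kk)) *m x = 0 by rewrite -X1 mulmxA ip mul0mx.
  rewrite h mulmx0 in X2.
  by move: nz; rewrite E1 X1 -X2 eqxx.
have dnn : dif n b b'.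
  case: (boolP (dif n b b')) => // nd; exfalso; apply: ne; apply: functional_extensionality_dep => j.
  exact: (ndif nd (ltn_ord j)).
case: (eqVneq (chain s' b n) 0) => [->|nzb]; first by rewrite mulmx0.
case: (eqVneq (chain s' b' n) 0) => [->|nzb']; first by rewrite adj0 mul0mx.
have dF := Inj n (leqnn n) b b' dnn nzb nzb'.
case: (Fine n (leqnn n) b) => [e|->]; first by rewrite e eqxx in nzb.
case: (Fine n (leqnn n) b') => [e|->]; first by rewrite e eqxx in nzb'.
apply: Hfull => eF; move: dF; rewrite eF => /existsP [i /andP [_]].
by rewrite eqxx.
Qed.

End FineOrth.


Theorem theorem1 (C : numClosedFieldType) (d : nat) (psi : 'cV[C]_d)
  (n : nat) (m : 'I_n -> nat) (sigma : forall j : 'I_n, 'I_(m j) -> 'M[C]_d) :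
  adj psi *m psi = 1%:M ->
  medium_consistent (psi *m adj psi) sigma ->
  exists (m' : 'I_n -> nat) (sigma' : forall j : 'I_n, 'I_(m' j) -> 'M[C]_d),
    medium_consistent (psi *m adj psi) sigma' /\
    (forall j : 'I_n, fine_graining (sigma j) (sigma' j)) /\
    (forall (j : 'I_n) (k : 'I_(m' j)), exists phi : 'cV[C]_d,
        adj phi *m phi = 1%:M /\ sigma' j k = phi *m adj phi).
Proof.
case: d psi sigma => [|N] psi sigma hpsi.
  exfalso; move/matrixP: hpsi => /(_ 0 0); rewrite !mxE big_ord0 eqxx mulr1n.
  by move/eqP; rewrite eq_sym oner_eq0.
move=> [Hex Hc].
have Hfull : forall al be : history m,
    al <> be -> adj (chain psi sigma be n) *m chain psi sigma al n = 0.
  by move=> al be ne; apply/tr11_0; rewrite -coh_chain; exact: (proj2 (Hc al be) ne).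
have Htr := trunc Hex Hfull.
have Hcore : forall j : 'I_n, exists W : 'M[C]_N.+1,
   [/\ adj W *m W = 1%:M, W *m adj W = 1%:M,
     forall c, exists a, sigma j a *m col c W = col c W &
     forall x c, x \in xsl psi sigma j -> col c W *m (adj (col c W) *m x) = 0 \/
                             col c W *m (adj (col c W) *m x) = x].
  move=> j; have [Hp _] := Hex j; apply: core; first exact: Hex.
    move=> x /mapP [g _ ->]; exists (g j).
    by rewrite (chainS psi sigma _ j) (proj2 (Hp _)) mulmxA (proj1 (Hp _)).
  move=> x y /mapP [g _ ->] /mapP [g' _ ->].
  case: (boolP (dif j.+1 (fun i => g i) (fun i => g' i))) => dg.
    right; apply: (@Htr (n - j.+1)%N j.+1); first by rewrite subnKC.
    by rewrite dif_sym.
  by left; apply: chain_agree => i ik; exact: (ndif dg ik).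
have [W HW] := fin_all_exists Hcore.
have W1 j : adj (W j) *m W j = 1%:M by case: (HW j).
have W2 j : W j *m adj (W j) = 1%:M by case: (HW j).
have W4 j x c : x \in xsl psi sigma j ->
    col c (W j) *m (adj (col c (W j)) *m x) = 0 \/
    col c (W j) *m (adj (col c (W j)) *m x) = x.
  by case: (HW j) => _ _ _; apply.
have : forall j, exists g : 'I_N.+1 -> 'I_(m j),
    forall c, sigma j (g c) *m col c (W j) = col c (W j).
  by move=> j; case: (HW j) => _ _ H3 _; exact: fin_all_exists H3.
move=> /(@fin_all_exists _ (fun j => 'I_N.+1 -> 'I_(m j))
   (fun j g => forall c, sigma j (g c) *m col c (W j) = col c (W j))) [f Hf].
exists (fun _ => N.+1), (fun j => Qf (W j)).
split; [split|split].
- by move=> j; apply: Q_exh.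
- move=> al be; split; first by move=> ->.
  move=> ne; rewrite coh_chain; apply/tr11_0.
  exact: (fine_orth Hex Hfull W1 Hf W4 ne).
- by move=> j; exact: Q_fine (Hex j) (W2 j) (Hf j).
- move=> j k; exists (col k (W j)); split; last by [].
  by rewrite colW_ip W1 mxE eqxx.
Qed.
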